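(* Let $n\in\mathbb N$ and let $K\subset\mathbb R^n$ with $\mathrm{Outrad}(K)\le1$. Then \[ \mathrm{diam}(K^{cc})\le\sqrt{\frac{2n}{n+1}}\,\mathrm{diam}(K). \]
   Context: $B(x,r)$ is the closed Euclidean ball. For $A\subseteq\mathbb R^n$, $A^c=\bigcap_{x\in A}B(x,1)$ and $A^{cc}=(A^c)^c$ (the $c$-hull of $A$). $\mathrm{Outrad}(A)$ is the infimum of $R\ge0$ with $A\subseteq B(z,R)$ for some $z$; $\mathrm{diam}(A)=\sup\{\|x-y\|_2:x,y\in A\}$. *)

(* Defs.v *)
From HB Require Import structures.
From mathcomp Require Import all_boot all_order all_algebra.
From mathcomp Require Import all_classical all_reals ereal.
Set Implicit Arguments. Unset Strict Implicit. Unset Printing Implicit Defensive.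
Import Order.TTheory GRing.Theory Num.Theory.
Local Open Scope ring_scope.
Local Open Scope classical_set_scope.

Definition enorm {R : realType} {n : nat} (x : 'rV[R]_n) : R :=
  Num.sqrt (\sum_(i < n) x 0 i ^+ 2).

Definition cball {R : realType} {n : nat} (z : 'rV[R]_n) (r : R) : set 'rV[R]_n :=
  [set x | enorm (x - z) <= r].

Definition cdual {R : realType} {n : nat} (A : set 'rV[R]_n) : set 'rV[R]_n :=
  [set y | forall x, A x -> cball x 1 y].

(* c-hull A^cc *)
Definition chull {R : realType} {n : nat} (A : set 'rV[R]_n) : set 'rV[R]_n :=
  cdual (cdual A).

(* Outrad(A) = inf { R >= 0 | exists z, A ⊆ B(z,R) }, in extended reals
   (+oo if A is unbounded) *)
Definition Outrad {R : realType} {n : nat} (A : set 'rV[R]_n) : \bar R :=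
  ereal_inf ((fun r : R => r%:E) @`
    [set r : R | 0 <= r /\ exists z, A `<=` cball z r]).

(* diam(A) = sup { |x - y| : x, y in A }, in extended reals
   (-oo for the empty set) *)
Definition diam {R : realType} {n : nat} (A : set 'rV[R]_n) : \bar R :=
  ereal_sup [set (enorm (x - y))%:E | x in A & y in A].

(* Main.v *)
Require Import Defs.
From HB Require Import structures.
From mathcomp Require Import all_boot all_order all_algebra.
From mathcomp Require Import all_classical all_reals ereal.
From mathcomp Require Import topology normedtype derive.
From mathcomp Require Import ring lra.
Import Order.TTheory GRing.Theory Num.Theory.
Import numFieldNormedType.Exports.
Local Open Scope ring_scope.
Local Open Scope classical_set_scope.
Section Vec.
Context {R : realType}.
Context {n : nat}.
Implicit Types x y z : 'rV[R]_n.

Definition dot x y : R := \sum_j x 0 j * y 0 j.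
Definition sq x : R := dot x x.

Lemma dotC x y : dot x y = dot y x.
Proof. by apply: eq_bigr => j _; rewrite mulrC. Qed.
Lemma dotDl x y z : dot (x + y) z = dot x z + dot y z.
Proof. by rewrite /dot -big_split; apply: eq_bigr => j _; rewrite mxE mulrDl. Qed.
Lemma dotDr x y z : dot z (x + y) = dot z x + dot z y.
Proof. by rewrite dotC dotDl !(dotC z). Qed.
Lemma dotZl a x y : dot (a *: x) y = a * dot x y.
Proof. by rewrite /dot mulr_sumr; apply: eq_bigr => j _; rewrite mxE mulrA. Qed.
Lemma dotZr a x y : dot y (a *: x) = a * dot y x.
Proof. by rewrite dotC dotZl dotC. Qed.
Lemma dotNl x y : dot (- x) y = - dot x y.
Proof. by rewrite -scaleN1r dotZl mulN1r. Qed.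
Lemma dotNr x y : dot y (- x) = - dot y x.
Proof. by rewrite dotC dotNl dotC. Qed.
Lemma dotBl x y z : dot (x - y) z = dot x z - dot y z.
Proof. by rewrite dotDl dotNl. Qed.
Lemma dotBr x y z : dot z (x - y) = dot z x - dot z y.
Proof. by rewrite dotDr dotNr. Qed.
Lemma dot0l x : dot 0 x = 0.
Proof. by rewrite /dot big1 // => j _; rewrite mxE mul0r. Qed.
Lemma dot0r x : dot x 0 = 0.
Proof. by rewrite dotC dot0l. Qed.
Lemma dot_suml (I : Type) (r : seq I) (P : pred I) (F : I -> 'rV[R]_n) y :
  dot (\sum_(i <- r | P i) F i) y = \sum_(i <- r | P i) dot (F i) y.
Proof. exact: (big_morph (fun x => dot x y) (fun a b => dotDl a b y) (dot0l y)). Qed.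
Lemma dot_sumr (I : Type) (r : seq I) (P : pred I) (F : I -> 'rV[R]_n) y :
  dot y (\sum_(i <- r | P i) F i) = \sum_(i <- r | P i) dot y (F i).
Proof. rewrite dotC dot_suml; apply: eq_bigr => i _; exact: dotC. Qed.

Lemma sq_ge0 x : 0 <= sq x.
Proof. by apply: sumr_ge0 => j _; rewrite -expr2 sqr_ge0. Qed.
Lemma sqD x y : sq (x + y) = sq x + 2 * dot x y + sq y.
Proof. rewrite /sq !dotDl !dotDr (dotC y x); ring. Qed.
Lemma sqB x y : sq (x - y) = sq x - 2 * dot x y + sq y.
Proof. rewrite /sq !dotBl !dotBr (dotC y x); ring. Qed.
Lemma sqZ a x : sq (a *: x) = a ^+ 2 * sq x.
Proof. rewrite /sq dotZl dotZr; ring. Qed.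
Lemma sqN x : sq (- x) = sq x.
Proof. by rewrite /sq dotNl dotNr opprK. Qed.
Lemma sq_sym x y : sq (x - y) = sq (y - x).
Proof. by rewrite -sqN opprB. Qed.
Lemma sq0 : sq 0 = 0.
Proof. exact: dot0l. Qed.

Lemma enormE x : enorm x = Num.sqrt (sq x).
Proof. by rewrite /enorm /sq /dot; congr Num.sqrt; apply: eq_bigr => j _; rewrite expr2. Qed.
Lemma enorm_ge0 x : 0 <= enorm x.
Proof. by rewrite enormE sqrtr_ge0. Qed.
Lemma enorm_sq x : enorm x ^+ 2 = sq x.
Proof. by rewrite enormE sqr_sqrtr // sq_ge0. Qed.
Lemma enorm_le x r : 0 <= r -> (enorm x <= r) = (sq x <= r ^+ 2).
Proof.
move=> r0; rewrite -enorm_sq; apply/idP/idP => h.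
  by rewrite ler_sqr // ?nnegrE ?enorm_ge0.
by rewrite -ler_sqr // ?nnegrE ?enorm_ge0.
Qed.
Lemma enormN x : enorm (- x) = enorm x.
Proof. by rewrite !enormE sqN. Qed.
Lemma enorm_sym x y : enorm (x - y) = enorm (y - x).
Proof. by rewrite -enormN opprB. Qed.
Lemma enormZ a x : enorm (a *: x) = `|a| * enorm x.
Proof. by rewrite !enormE sqZ sqrtrM ?sqr_ge0 // sqrtr_sqr. Qed.

Lemma coord_sq x j : x 0 j ^+ 2 <= sq x.
Proof.
rewrite /sq /dot (bigD1 j) //= -expr2 lerDl.
by apply: sumr_ge0 => i _; rewrite -expr2 sqr_ge0.
Qed.
Lemma sq_coord_bound x d : (forall j, `|x 0 j| <= d) -> sq x <= n%:R * d ^+ 2.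
Proof.
move=> h; rewrite /sq /dot.
have -> : n%:R * d ^+ 2 = \sum_(j < n) d ^+ 2 by rewrite sumr_const card_ord mulr_natl.
apply: ler_sum => j _; rewrite -expr2 -real_normK ?num_real //.
by rewrite ler_sqr ?nnegrE ?normr_ge0 //; apply: le_trans (h j).
Qed.

Lemma dot_le_aux x y {t} : 0 < t -> 2 * t * dot x y <= t ^+ 2 * sq x + sq y.
Proof.
move=> t0; have := sq_ge0 (t *: x - y); rewrite sqB sqZ dotZl.
move=> h; rewrite -mulrA; lra.
Qed.

Lemma cs x y : dot x y <= enorm x * enorm y.
Proof.
have key : forall u v, enorm u = 0 -> dot u v <= 0.
  move=> u v u0; rewrite leNgt; apply/negP => d0.
  have tp : 0 < (sq v + 1) / dot u v by rewrite divr_gt0 // ltr_wpDl ?sq_ge0.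
  have := dot_le_aux u v tp; rewrite -(enorm_sq u) u0 expr0n /= mulr0 add0r.
  rewrite -mulrA divfK ?gt_eqF // => h; have := sq_ge0 v; lra.
have [a0|a0] := eqVneq (enorm x) 0; first by rewrite a0 mul0r; exact: key.
have [b0|b0] := eqVneq (enorm y) 0; first by rewrite b0 mulr0 dotC; exact: key.
have ap : 0 < enorm x by rewrite lt_def a0 enorm_ge0.
have bp : 0 < enorm y by rewrite lt_def b0 enorm_ge0.
have tp : 0 < enorm y / enorm x by rewrite divr_gt0.
have := dot_le_aux x y tp; rewrite -(enorm_sq x) -(enorm_sq y).
have e : enorm y / enorm x * enorm x = enorm y by rewrite divfK // gt_eqF.
move: (enorm y / enorm x) e tp => q e tp h.
have h2 : 2 * q * dot x y <= 2 * enorm y ^+ 2.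
  by apply: (le_trans h); rewrite -exprMn e; lra.
nra.
Qed.

Lemma enorm_triangle x y : enorm (x + y) <= enorm x + enorm y.
Proof.
rewrite enorm_le ?addr_ge0 ?enorm_ge0 // sqD -!enorm_sq.
have := cs x y; lra.
Qed.
Lemma enorm_triB x y z : enorm (x - z) <= enorm (x - y) + enorm (y - z).
Proof. by have := enorm_triangle (x - y) (y - z); rewrite addrA subrK. Qed.
End Vec.

Section Cont.
Context {R : realType}.

Lemma continuous_sum (T : topologicalType) (I : Type) (r : seq I) (F : I -> T -> R) :
  (forall i, continuous (F i)) -> continuous (fun x => \sum_(i <- r) F i x).
Proof.
move=> h; elim: r => [|a r ih].
  by under eq_fun do rewrite big_nil; exact: cst_continuous.
under eq_fun do rewrite big_cons.
by move=> x; apply: continuousD; [exact: h | exact: ih].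
Qed.
End Cont.

Section Core.
Context {R : realType}.
Context {n m : nat}.
Variable p : 'I_m -> 'rV[R]_n.
Implicit Types l : 'rV[R]_m.

Definition cen l : 'rV[R]_n := \sum_i l 0 i *: p i.
Definition Af l : R := \sum_i l 0 i * sq (p i).
Definition Vf l : R := Af l - sq (cen l).
Definition simplex : set 'rV[R]_m :=
  [set l | (forall i, 0 <= l 0 i) /\ \sum_i l 0 i = 1].

Lemma Vf_formula l : Vf l =
  \sum_i l 0 i * sq (p i) - \sum_j (\sum_i l 0 i * p i 0 j) * (\sum_i l 0 i * p i 0 j).
Proof.
rewrite /Vf /Af /sq /dot /cen; congr (_ - _); apply: eq_bigr => j _.
by rewrite summxE; under eq_bigr do rewrite mxE.
Qed.

Lemma Vf_cont : continuous Vf.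
Proof.
have -> : Vf = (fun l => \sum_i l 0 i * sq (p i) -
   \sum_j (\sum_i l 0 i * p i 0 j) * (\sum_i l 0 i * p i 0 j)).
  by apply: funext => l; exact: Vf_formula.
set F := (fun l : 'rV[R]_m => \sum_i l 0 i * sq (p i)).
set G := (fun l : 'rV[R]_m => \sum_j (\sum_i l 0 i * p i 0 j) * (\sum_i l 0 i * p i 0 j)).
move=> x; apply: (@continuousD _ _ _ F (fun l => - G l)).
  apply: continuous_sum => i y.
  apply: (@continuousM _ _ (fun l : 'rV[R]_m => l 0 i) (fun=> sq (p i))).
    exact: coord_continuous.
  exact: cst_continuous.
apply: (@continuousN _ _ _ G); apply: continuous_sum => j y.
have h : continuous (fun l : 'rV[R]_m => \sum_i l 0 i * p i 0 j).
  apply: continuous_sum => i z.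
  apply: (@continuousM _ _ (fun l : 'rV[R]_m => l 0 i) (fun=> p i 0 j)).
    exact: coord_continuous.
  exact: cst_continuous.
exact: (@continuousM _ _ (fun l : 'rV[R]_m => \sum_i l 0 i * p i 0 j) (fun l : 'rV[R]_m => \sum_i l 0 i * p i 0 j) y (h y) (h y)).
Qed.

Lemma simplex_closed : closed simplex.
Proof.
have -> : simplex = (\bigcap_(i in setT) [set l : 'rV[R]_m | 0 <= l 0 i]) `&`
   ((fun l : 'rV[R]_m => \sum_i l 0 i) @^-1` [set 1]).
  apply/seteqP; split => l /=.
    by move=> [h1 h2]; split => // i _; exact: h1.
  by move=> [h1 h2]; split => // i; exact: h1.
apply: closedI.
  apply: closed_bigI => i _.
  have h := @preimage_closed _ _ (fun l : 'rV[R]_m => l 0 i) [set x : R | 0 <= x]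
    (fun x _ => @coord_continuous R 1 m 0 i x) (@closed_ge R 0).
  exact: h.
apply: preimage_closed; last exact: closed_eq.
move=> x _; apply: continuous_sum => i; exact: coord_continuous.
Qed.

Lemma simplex_compact : compact simplex.
Proof.
apply: (subclosed_compact simplex_closed
  (rV_compact (fun=> @segment_compact R 0 1))).
move=> l [h1 h2] i /=; rewrite in_itv /= h1 /=.
rewrite -h2 (bigD1 i) //= lerDl; apply: sumr_ge0 => j _; exact: h1.
Qed.

Lemma simplex_nonempty : (0 < m)%N -> simplex !=set0.
Proof.
move=> m0; pose i0 := Ordinal m0.
exists (\row_i (i == i0)%:R); split => [i|]; first by rewrite mxE ler0n.
rewrite (bigD1 i0) //= mxE eqxx big1 ?addr0 // => i /negbTE ne.
by rewrite mxE ne.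
Qed.

Lemma exists_max : (0 < m)%N ->
  exists2 l, simplex l & forall l', simplex l' -> Vf l' <= Vf l.
Proof.
move=> m0.
have cf : {within simplex, continuous Vf} by apply: continuous_subspaceT; exact: Vf_cont.
have [l lin lmax] := EVT_max_rV (simplex_nonempty m0) simplex_compact cf.
exists l; first by rewrite inE in lin.
by move=> l' l'in; apply: lmax; rewrite inE.
Qed.
End Core.

Section Core2.
Context {R : realType}.
Context {n m : nat}.
Variable p : 'I_m -> 'rV[R]_n.
Implicit Types l : 'rV[R]_m.

Definition delta (i : 'I_m) : 'rV[R]_m := \row_k (k == i)%:R.

Lemma cen_lin a b l l' : cen p (a *: l + b *: l') = a *: cen p l + b *: cen p l'.
Proof.
rewrite /cen !scaler_sumr -big_split; apply: eq_bigr => k _.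
by rewrite !mxE scalerDl !scalerA.
Qed.
Lemma Af_lin a b l l' : Af p (a *: l + b *: l') = a * Af p l + b * Af p l'.
Proof.
rewrite /Af !mulr_sumr -big_split; apply: eq_bigr => k _.
by rewrite !mxE mulrDl !mulrA.
Qed.
Lemma cen_delta i : cen p (delta i) = p i.
Proof.
rewrite /cen (bigD1 i) //= mxE eqxx scale1r big1 ?addr0 // => k /negbTE ne.
by rewrite mxE ne scale0r.
Qed.
Lemma Af_delta i : Af p (delta i) = sq (p i).
Proof.
rewrite /Af (bigD1 i) //= mxE eqxx mul1r big1 ?addr0 // => k /negbTE ne.
by rewrite mxE ne mul0r.
Qed.

Lemma simplex_conv l i t : simplex l -> 0 <= t <= 1 ->
  simplex ((1 - t) *: l + t *: delta i).
Proof.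
move=> [l0 l1] /andP[t0 t1]; split => [k|].
  rewrite !mxE; apply: addr_ge0; first by apply: mulr_ge0 => //; rewrite subr_ge0.
  by apply: mulr_ge0 => //; rewrite ler0n.
under eq_bigr do rewrite !mxE.
rewrite big_split /= -!mulr_sumr l1 (bigD1 i) //= eqxx big1 ?addr0.
  by rewrite mulr1 mulr1 subrK.
by move=> k /negbTE ne; rewrite ne.
Qed.

Lemma kkt l : simplex l -> (forall l', simplex l' -> Vf p l' <= Vf p l) ->
  forall i, sq (p i - cen p l) <= Vf p l.
Proof.
move=> ls lmax i; rewrite leNgt; apply/negP => hlt.
set a := sq (p i - cen p l) - Vf p l.
set b := sq (p i - cen p l).
have a0 : 0 < a by rewrite subr_gt0.
have b0 : 0 <= b by exact: sq_ge0.
set t := a / (a + b).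
have ab0 : 0 < a + b by rewrite ltr_wpDr.
have e : t * (a + b) = a by rewrite divfK // gt_eqF.
have t0 : 0 < t by rewrite divr_gt0.
have t1 : t <= 1 by rewrite ler_pdivrMr // mul1r lerDl.
have := lmax _ (simplex_conv l i t ls _); rewrite ?(ltW t0) ?t1 //.
rewrite /Vf Af_lin cen_lin cen_delta Af_delta sqD !sqZ dotZl dotZr.
move: e a0 b0 t0 t1; rewrite /a /b /Vf sqB (dotC (p i)).
move: (Af p l) (sq (cen p l)) (sq (p i)) (dot (cen p l) (p i)) t => A C Q D T.
move=> e a0 b0 t0 t1 /(_ isT) h.
have h3 : 0 < T * T * (Q - 2 * D + C - (A - C)) by rewrite mulr_gt0 // mulr_gt0.
have e2 := congr1 (fun x => T * x) e; simpl in e2.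
nra.
Qed.

Lemma Vf_sum l : simplex l -> \sum_i l 0 i * sq (p i - cen p l) = Vf p l.
Proof.
move=> [l0 l1].
under eq_bigr do rewrite sqB mulrDr mulrBr.
rewrite big_split big_split /= sumrN -mulr_suml l1 mul1r -/(Af p l).
have -> : \sum_i l 0 i * (2 * dot (p i) (cen p l)) = 2 * sq (cen p l).
  rewrite /sq -{3}[cen p l]/(\sum_i l 0 i *: p i) dot_suml mulr_sumr.
  by apply: eq_bigr => k _; rewrite dotZl mulrCA.
rewrite /Vf; ring.
Qed.

Lemma kkt_eq l : simplex l -> (forall i, sq (p i - cen p l) <= Vf p l) ->
  forall i, l 0 i != 0 -> sq (p i - cen p l) = Vf p l.
Proof.
move=> ls h i li.
have hs : \sum_k l 0 k * (Vf p l - sq (p k - cen p l)) = 0.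
  under eq_bigr do rewrite mulrBr.
  rewrite sumrB Vf_sum // -mulr_suml (proj2 ls) mul1r subrr //.
have nn : forall k, true -> 0 <= l 0 k * (Vf p l - sq (p k - cen p l)).
  by move=> k _; apply: mulr_ge0; [exact: ls.1 k | rewrite subr_ge0; exact: h].
have := psumr_eq0P nn hs; move=> /(_ i) hh; move: (hh isT) => /eqP; rewrite mulf_eq0 (negbTE li) /= subr_eq0.
by move=> /eqP ->.
Qed.

Lemma kernel (S : {set 'I_m}) : (n.+1 < #|S|)%N ->
  exists mu : 'I_m -> R, [/\ forall i, i \notin S -> mu i = 0,
    \sum_i mu i = 0, \sum_i mu i *: p i = 0 & exists i, mu i != 0].
Proof.
move=> hS.
pose P : 'M[R]_(#|S|, n) := \matrix_(k < #|S|) p (enum_val k).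
pose M := row_mx (const_mx 1 : 'M[R]_(#|S|, 1)) P.
have rk : (0 < \rank (kermx M))%N.
  rewrite mxrank_ker subn_gt0; apply: leq_ltn_trans (rank_leq_col M) _.
  by rewrite add1n.
have [k0 hk0] : exists k, row k (kermx M) != 0.
  case: (pselect (exists k, row k (kermx M) != 0)) => // nok; exfalso.
  have : kermx M = 0.
    apply/row_matrixP => k; rewrite row0; apply/eqP; apply: contra_notT nok => h.
    by exists k.
  by move=> k0; move: rk; rewrite k0 mxrank0.
set u := row k0 (kermx M) in hk0.
have uM : u *m M = 0 by rewrite -row_mul mulmx_ker row0.
rewrite mul_mx_row in uM; move/eqP: uM; rewrite row_mx_eq0 => /andP[/eqP u1 /eqP u2].
pose mu i := \sum_k (if enum_val k == i then u 0 k else 0).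
have reV : forall f : 'I_m -> 'rV[R]_n, \sum_i mu i *: f i = \sum_k u 0 k *: f (enum_val k).
  move=> f; under eq_bigr do rewrite /mu scaler_suml.
  rewrite exchange_big /=; apply: eq_bigr => k _.
  rewrite (bigD1 (enum_val k)) //= eqxx big1 ?addr0 // => i ne.
  by rewrite eq_sym (negbTE ne) scale0r.
have reS : \sum_i mu i = \sum_k u 0 k.
  rewrite /mu exchange_big /=; apply: eq_bigr => k _.
  rewrite (bigD1 (enum_val k)) //= eqxx big1 ?addr0 // => i ne.
  by rewrite eq_sym (negbTE ne).
exists mu; split.
- move=> i iS; rewrite /mu big1 // => k _.
  case: eqP => // e; move: iS; rewrite -e; by rewrite enum_valP.
- rewrite reS; have := congr1 (fun A : 'M[R]_(1,1) => A 0 0) u1.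
  rewrite /= !mxE => h; apply: (etrans _ h); apply: eq_bigr => k _.
  by rewrite [const_mx 1 k 0]mxE mulr1.
- rewrite (reV p); apply: (etrans _ u2); rewrite mulmx_sum_row; apply: eq_bigr => k _; by rewrite rowK.
- have [k hk] : exists k, u 0 k != 0.
    case: (pselect (exists k, u 0 k != 0)) => // nok; exfalso.
    apply: (negP hk0); apply/eqP/rowP => k; rewrite [RHS]mxE.
    by apply/eqP; apply: contra_notT nok => h; exists k.
  exists (enum_val k); rewrite /mu (bigD1 k) //= eqxx big1 ?addr0 // => k' ne.
  by case: eqP => // /enum_val_inj e; move: ne; rewrite e eqxx.
Qed.
End Core2.

Section Core3.
Context {R : realType}.
Context {n m : nat}.
Variable p : 'I_m -> 'rV[R]_n.
Implicit Types l : 'rV[R]_m.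

Definition Good l := simplex l /\ (forall i, sq (p i - cen p l) <= Vf p l) /\
  (forall i, l 0 i != 0 -> sq (p i - cen p l) = Vf p l).
Definition supp l : {set 'I_m} := [set i | l 0 i != 0].

Lemma reduce l : Good l -> (n.+1 < #|supp l|)%N ->
  exists l', Good l' /\ (#|supp l'| < #|supp l|)%N.
Proof.
move=> [ls [h1 h2]] hS.
have [mu [mu0 musum mup [i0 hi0]]] := kernel p (supp l) hS.
have [k1 hk1] : exists k, 0 < mu k.
  case: (pselect (exists k, 0 < mu k)) => // no; exfalso.
  have nn : forall k, true -> 0 <= - mu k.
    move=> k _; rewrite oppr_ge0 leNgt; apply/negP => h; apply: no; by exists k.
  have s0 : \sum_k - mu k = 0 by rewrite sumrN musum oppr0.
  have := psumr_eq0P nn s0 => /(_ i0) hh; move: (hh isT) => /eqP.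
  by rewrite oppr_eq0 (negbTE hi0).
pose k0 := [arg min_(k < k1 | 0 < mu k) (l 0 k / mu k)]%O.
have [k0P k0min] : 0 < mu k0 /\ forall k, 0 < mu k -> l 0 k0 / mu k0 <= l 0 k / mu k.
  rewrite /k0; case: arg_minP => // j Pj minj; split => // k; exact: minj.
set tau := l 0 k0 / mu k0.
have tau0 : 0 <= tau by rewrite divr_ge0 // ?ls.1 // ltW.
pose l' := \row_i (l 0 i - tau * mu i).
have notsupp : forall i, l 0 i = 0 -> mu i = 0.
  by move=> i li; apply: mu0; rewrite inE li eqxx.
have cen' : cen p l' = cen p l.
  rewrite /cen; under eq_bigr do rewrite mxE scalerBl.
  rewrite sumrB; under [X in _ - X]eq_bigr do rewrite -scalerA.
  by rewrite -scaler_sumr mup scaler0 subr0.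
have key : forall i, mu i * sq (p i - cen p l) = mu i * Vf p l.
  move=> i; case: (eqVneq (l 0 i) 0) => li; first by rewrite notsupp // !mul0r.
  by rewrite h2.
have musq : \sum_i mu i * sq (p i) = 0.
  transitivity (\sum_i (mu i * Vf p l + 2 * dot (mu i *: p i) (cen p l)
                        - mu i * sq (cen p l))).
    by apply: eq_bigr => i _; rewrite dotZl -key sqB; ring.
  rewrite !big_split /= sumrN -!mulr_suml musum -mulr_sumr -dot_suml mup dot0l.
  ring.
have Af' : Af p l' = Af p l.
  rewrite /Af; under eq_bigr do rewrite mxE mulrBl.
  rewrite sumrB; under [X in _ - X]eq_bigr do rewrite -mulrA.
  by rewrite -mulr_sumr musq mulr0 subr0.
have Vf' : Vf p l' = Vf p l by rewrite /Vf Af' cen'.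
have k0l : l 0 k0 != 0.
  by apply/eqP => e; move: k0P; rewrite notsupp // ltxx.
have supp' : supp l' \subset supp l :\ k0.
  apply/fintype.subsetP => i; rewrite !inE mxE => hi; apply/andP; split.
    apply: contraNneq hi => ->; rewrite /tau divfK ?subrr // gt_eqF //.
  apply: contraNneq hi => li; by rewrite li notsupp // mulr0 subrr.
have l's : simplex l'.
  split => [i|].
    rewrite mxE subr_ge0; case: (ltrP 0 (mu i)) => hm.
      by rewrite -ler_pdivlMr //; exact: k0min.
    apply: le_trans (ls.1 i); exact: mulr_ge0_le0.
  under eq_bigr do rewrite mxE.
  by rewrite sumrB -mulr_sumr musum mulr0 subr0 ls.2.
exists l'; split.
  split => //; split; rewrite cen' Vf' // => i hi; apply: h2.
  have : i \in supp l' by rewrite inE.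
  by move/(fintype.subsetP supp'); rewrite !inE => /andP[].
apply: (leq_ltn_trans (subset_leq_card supp')).
by rewrite [X in (_ < X)%N](cardsD1 k0) inE k0l.
Qed.

Lemma good_small l : Good l -> exists l', Good l' /\ (#|supp l'| <= n.+1)%N.
Proof.
suff : forall k l, (#|supp l| <= k)%N -> Good l ->
  exists l', Good l' /\ (#|supp l'| <= n.+1)%N by move=> h; exact: h.
elim => [|k ih] l0 hk hg.
  by exists l0; split => //; apply: leq_trans hk _.
case: (leqP #|supp l0| n.+1) => h; first by exists l0.
have [l1 [hg1 hl1]] := reduce l0 hg h.
apply: ih hg1; rewrite -ltnS; exact: leq_trans hl1 hk.
Qed.
End Core3.

Section Core4.
Context {R : realType}.
Context {n m : nat}.
Variable p : 'I_m -> 'rV[R]_n.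

Lemma core : (0 < m)%N -> exists c V, [/\ (forall i, sq (p i - c) <= V), 0 <= V,
   (forall z s, (forall i, sq (p i - z) <= s) -> V + sq (c - z) <= s) &
   (forall D2, (forall i j, sq (p i - p j) <= D2) -> 2 * n.+1%:R * V <= n%:R * D2)].
Proof.
move=> m0.
have [l0 ls0 lmax] := exists_max p m0.
have g0 : Good p l0.
  split => //; split; first exact: kkt.
  by apply: kkt_eq => //; exact: kkt.
have [l [[ls [h1 h2]] hsupp]] := good_small p l0 g0.
exists (cen p l), (Vf p l).
have Vs := Vf_sum p l ls.
have l1 := ls.2.
have zero : \sum_i l 0 i *: (p i - cen p l) = 0.
  under eq_bigr do rewrite scalerBr.
  by rewrite sumrB -/(cen p l) -scaler_suml l1 scale1r subrr.
have V0 : 0 <= Vf p l.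
  rewrite -Vs; apply: sumr_ge0 => i _; apply: mulr_ge0; [exact: ls.1 | exact: sq_ge0].
split => //.
- move=> z s hs.
  have e : \sum_i l 0 i * sq (p i - z) = Vf p l + sq (cen p l - z).
    transitivity (\sum_i (l 0 i * sq (p i - cen p l) +
       2 * dot (l 0 i *: (p i - cen p l)) (cen p l - z) + l 0 i * sq (cen p l - z))).
      apply: eq_bigr => i _.
      have -> : p i - z = (p i - cen p l) + (cen p l - z) by rewrite addrA subrK.
      rewrite sqD dotZl; ring.
    rewrite !big_split /= Vs -mulr_sumr -dot_suml zero dot0l -mulr_suml l1; ring.
  rewrite -e; apply: le_trans (_ : \sum_i l 0 i * s <= s).
    by apply: ler_sum => i _; apply: ler_wpM2l; [exact: ls.1 | exact: hs].
  by rewrite -mulr_suml l1 mul1r.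
- move=> D2 hD.
  have i0 : 'I_m := Ordinal m0.
  have D20 : 0 <= D2 by have := hD i0 i0; rewrite subrr sq0.
  have step : forall i, l 0 i != 0 -> 2 * Vf p l <= (1 - l 0 i) * D2.
    move=> i li.
    have e : \sum_j l 0 j * sq (p i - p j) = 2 * Vf p l.
      transitivity (\sum_j (l 0 j * sq (p i - cen p l) -
         2 * dot (p i - cen p l) (l 0 j *: (p j - cen p l)) + l 0 j * sq (p j - cen p l))).
        apply: eq_bigr => j _.
        have -> : p i - p j = (p i - cen p l) - (p j - cen p l).
          by rewrite opprB addrA subrK.
        rewrite sqB dotZr; ring.
      rewrite !big_split /= sumrN Vs -mulr_suml l1 mul1r -mulr_sumr -dot_sumr zero dot0r.
      rewrite h2 //; ring.
    rewrite -e (bigD1 i) //= subrr sq0 mulr0 add0r.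
    have e1 : 1 - l 0 i = \sum_(j | j != i) l 0 j.
      by rewrite -l1 (bigD1 i) //= addrC addrK.
    rewrite e1 mulr_suml; apply: ler_sum => j _.
    apply: ler_wpM2l; [exact: ls.1 | exact: hD].
  set S := supp l in hsupp.
  have sum1 : \sum_(i in S) l 0 i = 1.
    rewrite -l1 [RHS](bigID (fun i => i \in S)) /= [X in _ = _ + X]big1 ?addr0 //.
    by move=> i; rewrite inE negbK => /eqP.
  have hsum : \sum_(i in S) 2 * Vf p l <= \sum_(i in S) (1 - l 0 i) * D2.
    by apply: ler_sum => i; rewrite inE => /step.
  rewrite sumr_const -mulr_suml sumrB sumr_const sum1 in hsum.
  have S0 : (0 < #|S|)%N.
    rewrite card_gt0; apply/eqP => e; move: sum1; rewrite e big_set0 => /eqP.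
    by rewrite eq_sym oner_eq0.
  have sN : (#|S|%:R : R) <= n.+1%:R by rewrite ler_nat.
  have s1 : (1 : R) <= #|S|%:R by rewrite ler1n.
  have hs2 : 2 * Vf p l * (#|S|%:R : R) <= (#|S|%:R - 1) * D2 by rewrite mulr_natr.
  move: hs2; clear hsum.
  move: (#|S|%:R : R) sN s1 => s sN s1 hsum.
  have nE : (n.+1%:R : R) = n%:R + 1 by rewrite -natr1.
  rewrite nE in sN *.
  move: (n%:R : R) sN => N sN.
  move: (Vf p l) V0 hsum => V V0 hsum.
  have s0 : 0 < s by apply: lt_le_trans s1; exact: ltr01.
  rewrite -(ler_pM2l s0).
  have hh1 : s * (2 * (N + 1) * V) <= (N + 1) * ((s - 1) * D2).
    have -> : s * (2 * (N + 1) * V) = (N + 1) * (2 * V * s) by ring.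
    apply: ler_wpM2l => //; lra.
  apply: le_trans hh1 _.
  rewrite -subr_ge0.
  have -> : s * (N * D2) - (N + 1) * ((s - 1) * D2) = (N + 1 - s) * D2 by ring.
  apply: mulr_ge0 => //; lra.
Qed.
End Core4.

Section SeqCore.
Context {R : realType} {n : nat}.

Lemma core_seq (s : seq 'rV[R]_n) : s != [::] -> exists c V, [/\
   (forall x, x \in s -> sq (x - c) <= V), 0 <= V,
   (forall z r, (forall x, x \in s -> sq (x - z) <= r) -> V + sq (c - z) <= r) &
   (forall D2, (forall x y, x \in s -> y \in s -> sq (x - y) <= D2) ->
      2 * n.+1%:R * V <= n%:R * D2)].
Proof.
move=> sn.
have s0 : (0 < size s)%N by case: s sn.
pose p := fun i : 'I_(size s) => nth 0 s i.
have pin : forall i, p i \in s by move=> i; rewrite /p mem_nth.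
have inp : forall x, x \in s -> exists i, p i = x.
  by move=> x xs; exists (Ordinal (etrans (index_mem x s) xs)); rewrite /p nth_index.
have [c [V [h1 h2 h3 h4]]] := core p s0.
exists c, V; split => //.
- by move=> x /inp [i <-].
- by move=> z r hz; apply: h3 => i; apply: hz.
- by move=> D2 hD; apply: h4 => i j; apply: hD.
Qed.

Lemma coord_le (x : 'rV[R]_n) d j : 0 <= d -> sq x <= d ^+ 2 -> `|x 0 j| <= d.
Proof.
move=> d0 h; rewrite -(ler_sqr (normr_ge0 _)) ?nnegrE // real_normK ?num_real //.
exact: le_trans (coord_sq x j) h.
Qed.
End SeqCore.

Section Main.
Context {R : realType} {n : nat}.

Definition coreP (s : seq 'rV[R]_n) (c : 'rV[R]_n) (V : R) := [/\
   (forall x, x \in s -> sq (x - c) <= V), 0 <= V,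
   (forall z r, (forall x, x \in s -> sq (x - z) <= r) -> V + sq (c - z) <= r) &
   (forall D2, (forall x y, x \in s -> y \in s -> sq (x - y) <= D2) ->
      2 * n.+1%:R * V <= n%:R * D2)].

Lemma outrad_V (K : set 'rV[R]_n) (s : seq 'rV[R]_n) c V :
  (Outrad K <= 1%:E)%E -> (forall x, x \in s -> K x) -> coreP s c V -> V <= 1.
Proof.
move=> hK sK [_ V0 stab _]; rewrite leNgt; apply/negP => V1.
have sV : 1 < Num.sqrt V by rewrite -sqrtr1 ltr_sqrt ?(lt_trans ltr01 V1).
have : (Outrad K < (Num.sqrt V)%:E)%E by apply: le_lt_trans hK _; rewrite lte_fin.
move=> /ereal_inf_lt [y [r [r0 [z Kz]] <-]]; rewrite lte_fin => rV.
have hs : forall x, x \in s -> sq (x - z) <= r ^+ 2.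
  by move=> x xs; rewrite -enorm_le //; exact: (Kz x (sK x xs)).
have h3 := stab z _ hs.
have h2 := sq_ge0 (c - z).
have h1 : r ^+ 2 < V.
  by rewrite -(sqr_sqrtr (ltW (lt_trans ltr01 V1))) ltr_pXn2r // ?nnegrE ?sqrtr_ge0.
clear hK; lra.
Qed.

Lemma main_nonempty (K : set 'rV[R]_n) (x0 : 'rV[R]_n) :
  K x0 -> (Outrad K <= 1%:E)%E ->
  exists z r, [/\ 0 <= r, r <= 1, (forall x, K x -> enorm (x - z) <= r) &
    (forall d, 0 <= d -> (forall x y, K x -> K y -> enorm (x - y) <= d) ->
       2 * n.+1%:R * r ^+ 2 <= n%:R * d ^+ 2)].
Proof.
move=> Kx0 hK.
have : forall s, exists cV : 'rV[R]_n * R, s != [::] -> coreP s cV.1 cV.2.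
  move=> s; case: (eqVneq s [::]) => [->|sn]; first by exists (0, 0).
  by have [c [V H]] := core_seq s sn; exists (c, V).
move=> /choice [F HF].
pose cS s := (F s).1; pose VS s := (F s).2.
pose Fin s := s != [::] /\ (forall x, x \in s -> K x).
have HP : forall s, Fin s -> coreP s (cS s) (VS s) by move=> s [sn _]; exact: HF.
have V1 : forall s, Fin s -> VS s <= 1.
  by move=> s [sn sK]; apply: (outrad_V K s _ _ hK sK); exact: HF.
have V0 : forall s, Fin s -> 0 <= VS s by move=> s /HP [].
have fin1 : Fin [:: x0] by split => // x; rewrite inE => /eqP ->.
pose Vset := [set v | exists2 s, Fin s & v = VS s].
have ne : Vset !=set0 by exists (VS [:: x0]); exists [:: x0].
have ub : ubound Vset 1 by move=> v [s fs ->]; exact: V1.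
have hub : has_ubound Vset by exists 1.
pose r2 := sup Vset.
have Vle : forall s, Fin s -> VS s <= r2.
  by move=> s fs; apply: ub_le_sup => //; exists s.
have r2le1 : r2 <= 1 by exact: ge_sup.
have r20 : 0 <= r2 by apply: le_trans (Vle _ fin1); exact: V0.
have mono : forall s t, Fin s -> Fin t -> (forall x, x \in s -> x \in t) ->
    VS s + sq (cS s - cS t) <= VS t.
  move=> s t fs ft st; have [_ _ stab _] := HP s fs; apply: stab => x xs.
  by have [h _ _ _] := HP t ft; apply: h; exact: st.
pose dl s := Num.sqrt (r2 - VS s).
have dl0 : forall s, 0 <= dl s by move=> s; exact: sqrtr_ge0.
have dl2 : forall s, Fin s -> dl s ^+ 2 = r2 - VS s.
  by move=> s fs; rewrite sqr_sqrtr // subr_ge0; exact: Vle.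
have closeu : forall s u j, Fin s -> Fin u -> (forall x, x \in s -> x \in u) ->
    `|cS s 0 j - cS u 0 j| <= dl s.
  move=> s u j fs fu su.
  have := coord_le (cS s - cS u) (dl s) j (dl0 s).
  rewrite !mxE; apply; rewrite dl2 //.
  have := mono s u fs fu su; have := Vle u fu; lra.
have pair : forall s t j, Fin s -> Fin t -> cS s 0 j - dl s <= cS t 0 j + dl t.
  move=> s t j fs ft.
  have fu : Fin (s ++ t).
    split; first by case: s fs => // [[]].
    by move=> x; rewrite mem_cat => /orP[]; [exact: fs.2 | exact: ft.2].
  have st1 : forall x, x \in s -> x \in s ++ t by move=> x xs; rewrite mem_cat xs.
  have st2 : forall x, x \in t -> x \in s ++ t by move=> x xs; rewrite mem_cat xs orbT.
  have h1 := closeu s (s ++ t) j fs fu st1.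
  have h2 := closeu t (s ++ t) j ft fu st2.
  move: h1 h2; rewrite !ler_norml; lra.
pose Zset j := [set y | exists2 s, Fin s & y = cS s 0 j - dl s].
pose z := \row_j sup (Zset j).
have zclose : forall t j, Fin t -> `|cS t 0 j - z 0 j| <= dl t.
  move=> t j ft; rewrite mxE.
  have zne : Zset j !=set0 by exists (cS t 0 j - dl t); exists t.
  have zub : ubound (Zset j) (cS t 0 j + dl t) by move=> y [s fs ->]; exact: pair.
  have h1 : sup (Zset j) <= cS t 0 j + dl t by exact: ge_sup.
  have h2 : cS t 0 j - dl t <= sup (Zset j).
    by apply: ub_le_sup; [exists (cS t 0 j + dl t) | exists t].
  rewrite ler_norml; lra.
have zsq : forall t, Fin t -> sq (cS t - z) <= n%:R * dl t ^+ 2.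
  move=> t ft; apply: sq_coord_bound => j; rewrite !mxE.
  by have := zclose t j ft; rewrite mxE.
have approx : forall e, 0 < e -> exists2 s, Fin s & r2 - e < VS s.
  move=> e e0; have [v [s fs ->] hv] := sup_adherent e0 (conj ne hub).
  by exists s.
pose r := Num.sqrt r2.
have r0 : 0 <= r by exact: sqrtr_ge0.
have rr : r ^+ 2 = r2 by rewrite sqr_sqrtr.
exists z, r; split => //.
- by rewrite -sqrtr1 ler_wsqrtr.
- move=> x Kx; apply/ler_addgt0Pr => e e0.
  have ep : 0 < e ^+ 2 / n.+1%:R by rewrite divr_gt0 ?exprn_gt0 ?ltr0n.
  have [s fs hs] := approx _ ep.
  have fu : Fin (x :: s).
    by split => // y; rewrite inE => /orP[/eqP -> //|]; exact: fs.2.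
  have hsu : VS s <= VS (x :: s).
    have sxs : forall y, y \in s -> y \in x :: s by move=> y ys; rewrite inE ys orbT.
    have := mono s (x :: s) fs fu sxs.
    have := sq_ge0 (cS s - cS (x :: s)); lra.
  have e1 : enorm (x - cS (x :: s)) <= r.
    rewrite enorm_le // rr; apply: le_trans (Vle _ fu).
    by have [h _ _ _] := HP _ fu; apply: h; rewrite inE eqxx.
  have e2 : enorm (cS (x :: s) - z) <= e.
    rewrite enorm_le ?(ltW e0) //; apply: le_trans (zsq _ fu) _.
    rewrite dl2 //.
    have hlt : r2 - VS (x :: s) <= e ^+ 2 / n.+1%:R.
      move: hs hsu; set E := e ^+ 2 / n.+1%:R; set A := VS s; set B := VS (x :: s).
      move=> hs hsu; clear -hs hsu; lra.
    have -> : e ^+ 2 = n.+1%:R * (e ^+ 2 / n.+1%:R) by rewrite mulrC divfK // pnatr_eq0.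
    apply: ler_pM; rewrite ?ler0n ?ler_nat //; first by rewrite subr_ge0; exact: Vle.
  by apply: le_trans (enorm_triB _ (cS (x :: s)) _) _; exact: lerD.
- move=> d d0 hd.
  have hV : forall s, Fin s -> 2 * n.+1%:R * VS s <= n%:R * d ^+ 2.
    move=> s fs; have [_ _ _ jung] := HP s fs; apply: jung => x y xs ys.
    by rewrite -enorm_le //; apply: hd; [exact: fs.2 | exact: fs.2].
  rewrite rr.
  have np : 0 < 2 * n.+1%:R :> R by rewrite mulr_gt0 ?ltr0n.
  rewrite mulrC -ler_pdivlMr // ; apply: ge_sup => // v [s fs ->].
  by rewrite ler_pdivlMr // mulrC; exact: hV.
Qed.
End Main.

Lemma enorm0 {R : realType} {n : nat} : enorm (0 : 'rV[R]_n) = 0.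
Proof. by rewrite enormE sq0 sqrtr0. Qed.

Lemma chull_ball {R : realType} {n : nat} (K : set 'rV[R]_n) z r :
  0 <= r -> r <= 1 -> (forall x, K x -> enorm (x - z) <= r) ->
  forall x, chull K x -> enorm (x - z) <= r.
Proof.
move=> r0 r1 Kin x Cx.
set e := enorm (x - z).
have e0 : 0 <= e by exact: enorm_ge0.
case: (eqVneq e 0) => [->//|en0].
have ep : 0 < e by rewrite lt_def en0 e0.
set t := (1 - r) / e.
have t0 : 0 <= t by rewrite divr_ge0 // subr_ge0.
have te : t * e = 1 - r by rewrite /t divfK.
pose w := z - t *: (x - z).
have hw : cdual K w.
  move=> k Kk; rewrite /cball /=.
  have -> : w - k = (z - k) + (- (t *: (x - z))) by rewrite /w addrAC.
  apply: le_trans (enorm_triangle _ _) _.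
  rewrite enormN enormZ ger0_norm // -/e te enorm_sym.
  have := Kin k Kk; lra.
have := Cx w hw; rewrite /cball /=.
have -> : x - w = (1 + t) *: (x - z).
  by rewrite /w opprB addrA scalerDl scale1r addrC addrA [X in X + _]addrC.
rewrite enormZ ger0_norm ?addr_ge0 // -/e mulrDl mul1r te; lra.
Qed.

Theorem theorem3p7 (R : realType) (n : nat) (K : set 'rV[R]_n) :
  (Outrad K <= 1%:E)%E ->
  (diam (chull K) <= (Num.sqrt (2 * n%:R / (n%:R + 1)))%:E * diam K)%E.
Proof.
move=> hK.
case: (pselect (K !=set0)) => [[x0 Kx0]|K0].
- have [z [r [r0 r1 Kin jung]]] := main_nonempty K x0 Kx0 hK.
  have dub : (diam K <= (2 * r)%:E)%E.
    apply: ge_ereal_sup => _ [x Kx [y Ky <-]]; rewrite lee_fin.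
    apply: le_trans (enorm_triB x z y) _.
    rewrite (enorm_sym z y) mulr2n mulrDl mul1r.
    by apply: lerD; apply: Kin.
  have d0 : (0%:E <= diam K)%E.
    apply: le_trans (_ : (enorm (x0 - x0))%:E <= _)%E.
      by rewrite lee_fin enorm_ge0.
    by apply: ereal_sup_ubound; exists x0 => //; exists x0.
  set d := fine (diam K).
  have dE : diam K = d%:E.
    by rewrite /d fineK // ge0_fin_numE // (le_lt_trans dub) // ltry.
  have dxy : forall x y, K x -> K y -> enorm (x - y) <= d.
    move=> x y Kx Ky; rewrite -lee_fin -dE; apply: ereal_sup_ubound.
    by exists x => //; exists y.
  have dd0 : 0 <= d by rewrite -lee_fin -dE.
  have J := jung d dd0 dxy.
  have hin := chull_ball K z r r0 r1 Kin.
  rewrite dE -EFinM; apply: ge_ereal_sup => _ [x Cx [y Cy <-]]; rewrite lee_fin.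
  have h2r : enorm (x - y) <= 2 * r.
    apply: le_trans (enorm_triB x z y) _.
    rewrite (enorm_sym z y) mulr2n mulrDl mul1r.
    by apply: lerD; apply: hin.
  apply: le_trans h2r _.
  have nE : (n.+1%:R : R) = n%:R + 1 by rewrite -natr1.
  rewrite nE in J.
  have N0 : (0 : R) <= n%:R by rewrite ler0n.
  move: (n%:R : R) N0 J => N N0 J.
  have N1 : 0 < N + 1 by lra.
  have c0 : 0 <= 2 * N / (N + 1) by rewrite divr_ge0 ?mulr_ge0 //; lra.
  have sq2 : (2 * r) ^+ 2 <= 2 * N / (N + 1) * d ^+ 2.
    rewrite mulrAC ler_pdivlMr //.
    rewrite exprMn.
    have -> : (2 : R) ^+ 2 = 4 by rewrite expr2; lra.
    move: (r ^+ 2) J => r2 J.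
    move: (d ^+ 2) J => D J; clear -J; nra.
  have h2 : 0 <= 2 * r by lra.
  rewrite -(ger0_norm h2) -sqrtr_sqr -(ger0_norm dd0) -sqrtr_sqr -sqrtrM //.
  by apply: ler_wsqrtr.
- have K0' : forall x, ~ K x by move=> x Kx; apply: K0; exists x.
  apply: ge_ereal_sup => _ [x Cx [y Cy <-]].
  case: n K K0 K0' hK x y Cx Cy => [|n'] K K0 K0' hK x y Cx Cy.
    rewrite /enorm big_ord0 sqrtr0 mulr0 mul0r sqrtr0 mul0e; exact: lexx.
  exfalso.
  pose e0 : 'rV[R]_n'.+1 := \row_j (j == ord0)%:R.
  have se0 : sq e0 = 1.
    rewrite /sq /dot (bigD1 ord0) //= big1 ?addr0; first by rewrite mxE eqxx mulr1.
    by move=> j /negbTE jn; rewrite mxE jn mul0r.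
  pose w := x + 2 *: e0.
  have hw : cdual K w by move=> k Kk; exfalso; exact: K0' Kk.
  have := Cx w hw; rewrite /cball /= /w opprD addrA subrr add0r enormN enormZ.
  rewrite enormE se0 sqrtr1 mulr1 ger0_norm //.
  by rewrite leNgt ltr1n.
Qed.
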